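(* Suppose $(A,W)$ is a $T_1$ Pratt comonoid which is generated by a countably infinite family $S$ of subsets of $A$ that satisfy no nontrivial distributive lattice relations (i.e., $S$ is a set of free generators of a free distributive lattice). Then $W$ has at least continuum cardinality, and in fact $W$ contains a complete sublattice isomorphic to the lattice of all subsets of $\omega$.
   Context: A Pratt comonoid is a pair $(A,W)$ where $A$ is a set and $W$ is a set of subsets of $A$ such that (i) $\emptyset\in W$ and $A\in W$; (ii) whenever $C\subseteq A\times A$ is such that for every $a\in A$ both the $a$-th row $\{b\mid (a,b)\in C\}$ and the $a$-th column $\{b\mid (b,a)\in C\}$ belong to $W$ (a crossword over $W$), the diagonal $\{b\mid (b,b)\in C\}$ also belongs to $W$. $(A,W)$ is $T_1$ if for all distinct $a,b\in A$ some member of $W$ contains $a$ but not $b$. $(A,W)$ is generated by a family $S$ of subsets of $A$ if $W$ is the least Pratt comonoid structure on $A$ containing $S$ (Pratt comonoid structures on $A$ are closed under arbitrary intersections). A complete sublattice of $W$ is a subset of $W$ closed under arbitrary (possibly infinite) unions and intersections taken in the power set of $A$, not necessarily containing $\emptyset$ or $A$. *)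

(* Defs.v *)
From HB Require Import structures.
From mathcomp Require Import all_boot all_order.
From mathcomp Require Import boolp classical_sets.
Set Implicit Arguments. Unset Strict Implicit. Unset Printing Implicit Defensive.
Import Order.TTheory.
Local Open Scope classical_set_scope.

Definition crossword {A : Type} (W : set (set A)) (C : set (A * A)) : Prop :=
  forall a : A, W [set b | C (a, b)] /\ W [set b | C (b, a)].

Definition pratt_comonoid {A : Type} (W : set (set A)) : Prop :=
  W set0 /\ W setT /\
  forall C : set (A * A), crossword W C -> W [set b | C (b, b)].

Definition pratt_T1 {A : Type} (W : set (set A)) : Prop :=
  forall a b : A, a <> b -> exists U, W U /\ U a /\ ~ U b.

Definition pratt_generated_by {A : Type} (W S : set (set A)) : Prop :=
  pratt_comonoid W /\ S `<=` W /\
  forall W' : set (set A), pratt_comonoid W' -> S `<=` W' -> W `<=` W'.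

Inductive lterm : Type :=
| LVar of nat
| LMeet of lterm & lterm
| LJoin of lterm & lterm.

Fixpoint eval_set {A : Type} (s : nat -> set A) (t : lterm) : set A :=
  match t with
  | LVar n => s n
  | LMeet t1 t2 => eval_set s t1 `&` eval_set s t2
  | LJoin t1 t2 => eval_set s t1 `|` eval_set s t2
  end.

Fixpoint eval_lat {d : Order.disp_t} {L : latticeType d} (v : nat -> L)
    (t : lterm) : L :=
  match t with
  | LVar n => v n
  | LMeet t1 t2 => Order.meet (eval_lat v t1) (eval_lat v t2)
  | LJoin t1 t2 => Order.join (eval_lat v t1) (eval_lat v t2)
  end.

Definition distr_identity (t1 t2 : lterm) : Prop :=
  forall (d : Order.disp_t) (L : distrLatticeType d) (v : nat -> L),
    eval_lat v t1 = eval_lat v t2.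

(* The family s satisfies no nontrivial distributive lattice relations:
   every lattice relation among the s n is a distributive-lattice identity,
   i.e. the s n freely generate a free distributive lattice. *)
Definition distr_free {A : Type} (s : nat -> set A) : Prop :=
  forall t1 t2 : lterm, eval_set s t1 = eval_set s t2 -> distr_identity t1 t2.

Definition complete_sublattice {A : Type} (L : set (set A)) : Prop :=
  forall F : set (set A), F `<=` L -> F !=set0 ->
    L (\bigcup_(X in F) X) /\ L (\bigcap_(X in F) X).

(* Main.v *)
Require Import Defs.
From HB Require Import structures.
From mathcomp Require Import all_boot all_order.
From mathcomp Require Import boolp classical_sets.
Local Open Scope classical_set_scope.

Lemma seteq_ext {T : Type} (X Y : set T) : (forall x, X x <-> Y x) -> X = Y.
Proof. move=> h; apply/funext => x; apply/propext; exact: h. Qed.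

Lemma W_condl {A : Type} (W : set (set A)) (P : Prop) (X : set A) :
  pratt_comonoid W -> W X -> W [set y | P /\ X y].
Proof.
move=> [h0 [hT _]] hX; case: (pselect P) => hP.
- by rewrite (_ : [set y | P /\ X y] = X) //; apply: seteq_ext => y /=; split => [[]|].
- by rewrite (_ : [set y | P /\ X y] = set0) //; apply: seteq_ext => y /=; split => [[]|].
Qed.

Lemma W_condr {A : Type} (W : set (set A)) (P : Prop) (X : set A) :
  pratt_comonoid W -> W X -> W [set y | X y /\ P].
Proof.
move=> hW hX; rewrite (_ : [set y | X y /\ P] = [set y | P /\ X y]).
  exact: W_condl.
by apply: seteq_ext => y /=; split => -[].
Qed.

Lemma W_condorl {A : Type} (W : set (set A)) (P : Prop) (X : set A) :
  pratt_comonoid W -> W X -> W [set y | P \/ X y].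
Proof.
move=> [h0 [hT _]] hX; case: (pselect P) => hP.
- by rewrite (_ : [set y | P \/ X y] = setT) //; apply: seteq_ext => y /=; split => // _; left.
- by rewrite (_ : [set y | P \/ X y] = X) //; apply: seteq_ext => y /=; split => [[]|] //; right.
Qed.

Lemma W_condorr {A : Type} (W : set (set A)) (P : Prop) (X : set A) :
  pratt_comonoid W -> W X -> W [set y | X y \/ P].
Proof.
move=> hW hX; rewrite (_ : [set y | X y \/ P] = [set y | P \/ X y]).
  exact: W_condorl.
by apply: seteq_ext => y /=; split => -[h|h]; [right|left|right|left].
Qed.

Lemma W_setI {A : Type} (W : set (set A)) (U V : set A) :
  pratt_comonoid W -> W U -> W V -> W (U `&` V).
Proof.
move=> hW hU hV; have [_ [_ hC]] := hW.
suff hc : crossword W (fun p : A * A => U p.1 /\ V p.2) by exact: (hC _ hc).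
move=> a; split.
- rewrite /=; exact: (@W_condl _ W (U a) _ hW hV).
- rewrite /=; exact: (@W_condr _ W (V a) _ hW hU).
Qed.

Lemma W_setU {A : Type} (W : set (set A)) (U V : set A) :
  pratt_comonoid W -> W U -> W V -> W (U `|` V).
Proof.
move=> hW hU hV; have [_ [_ hC]] := hW.
suff hc : crossword W (fun p : A * A => U p.1 \/ V p.2) by exact: (hC _ hc).
move=> a; split.
- rewrite /=; exact: (@W_condorl _ W (U a) _ hW hV).
- rewrite /=; exact: (@W_condorr _ W (V a) _ hW hU).
Qed.

Lemma W_bforall {A : Type} (W : set (set A)) (n : nat) (Q : nat -> Prop)
   (X : nat -> set A) : pratt_comonoid W -> (forall k, W (X k)) ->
  W [set y | forall k, (k < n)%N -> Q k -> X k y].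
Proof.
move=> hW hX; elim: n => [|n IH].
  have [_ [hT _]] := hW.
  by rewrite (_ : [set y | _] = setT) //; apply: seteq_ext => y /=; split.
rewrite (_ : [set y | _] = [set y | forall k, (k < n)%N -> Q k -> X k y]
     `&` [set y | Q n -> X n y]).
  apply: W_setI => //; case: (pselect (Q n)) => hq.
    have -> : [set y | Q n -> X n y] = X n by apply: seteq_ext => y /=; split; auto.
    exact: hX.
  have [_ [hT _]] := hW.
  by rewrite (_ : [set y | Q n -> X n y] = setT) //; apply: seteq_ext => y /=; split.
apply: seteq_ext => y /=; split.
  move=> h; split; [move=> k hk; apply: h; exact: (ltn_trans hk) | exact: h].
move=> [h1 h2] k; rewrite ltnS leq_eqVlt => /orP [/eqP -> //|hk]; exact: h1.
Qed.

Lemma W_bexists {A : Type} (W : set (set A)) (n : nat) (Q : nat -> Prop)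
   (X : nat -> set A) : pratt_comonoid W -> (forall k, W (X k)) ->
  W [set y | exists k, (k < n)%N /\ Q k /\ X k y].
Proof.
move=> hW hX; elim: n => [|n IH].
  have [h0 _] := hW.
  by rewrite (_ : [set y | _] = set0) //; apply: seteq_ext => y /=; split => // -[k []].
rewrite (_ : [set y | _] = [set y | exists k, (k < n)%N /\ Q k /\ X k y]
     `|` [set y | Q n /\ X n y]).
  by apply: W_setU => //; apply: W_condl.
apply: seteq_ext => y /=; split.
  move=> [k [hk [hq hx]]]; move: hk; rewrite ltnS leq_eqVlt => /orP [/eqP eqk|hk].
    by right; rewrite -eqk.
  by left; exists k.
move=> [[k [hk hq]]|[hq hx]]; first by exists k; split => //; exact: ltn_trans hk _.
by exists n.
Qed.
Arguments W_setU {A W U V}.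
Arguments W_setI {A W U V}.


Definition upw {A : Type} (s : nat -> set A) : set (set A) :=
  fun U => forall u v, (forall i, s i u -> s i v) -> U u -> U v.

Lemma upw_pratt {A : Type} (s : nat -> set A) : pratt_comonoid (upw s).
Proof.
split; first by move=> u v _.
split; first by move=> u v _.
move=> C hC u v huv /= Cuu.
have [r _] := hC u; have Cuv : C (u, v) by exact: (r u v huv Cuu).
have [_ c] := hC v; exact: (c u v huv Cuv).
Qed.

Lemma sep {A : Type} (W : set (set A)) (s : nat -> set A) :
  pratt_T1 W -> pratt_generated_by W (range s) ->
  forall u v, u <> v -> exists i, s i u /\ ~ s i v.
Proof.
move=> hT [_ [_ hmin]] u v huv.
have [U [WU [Uu nUv]]] := hT u v huv.
have sub : W `<=` upw s.
  apply: hmin; first exact: upw_pratt.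
  move=> X [i _ <-] x y hxy; exact: hxy.
case: (pselect (exists i, s i u /\ ~ s i v)) => // hn.
exfalso; apply: nUv; apply: (sub U WU u v) => // i siu.
apply: contrapT => nsv; apply: hn; by exists i.
Qed.

Fixpoint tjoin (i0 : nat) (l : seq nat) : lterm :=
  match l with [::] => LVar i0 | j :: l' => LJoin (LVar i0) (tjoin j l') end.
Fixpoint tmeet (i0 : nat) (l : seq nat) : lterm :=
  match l with [::] => LVar i0 | j :: l' => LMeet (LVar i0) (tmeet j l') end.

Lemma eval_tjoin {A : Type} (s : nat -> set A) i0 l x :
  eval_set s (tjoin i0 l) x <-> exists i, i \in i0 :: l /\ s i x.
Proof.
elim: l i0 => [|j l IH] i0 /=.
  split; first by move=> h; exists i0; rewrite inE eqxx.
  by move=> [i []]; rewrite inE => /eqP ->.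
split.
  move=> [h|/IH [i [hi h]]]; first by exists i0; rewrite inE eqxx.
  by exists i; rewrite inE hi orbT.
move=> [i []]; rewrite inE => /orP [/eqP -> h|hi h]; first by left.
by right; apply/IH; exists i.
Qed.

Lemma eval_tmeet {A : Type} (s : nat -> set A) i0 l x :
  eval_set s (tmeet i0 l) x <-> forall i, i \in i0 :: l -> s i x.
Proof.
elim: l i0 => [|j l IH] i0 /=.
  split; first by move=> h i; rewrite inE => /eqP ->.
  by move=> h; apply: h; rewrite inE eqxx.
split.
  move=> [h /IH h2] i; rewrite inE => /orP [/eqP -> //|hi]; exact: h2.
move=> h; split; first by apply: h; rewrite inE eqxx.
by apply/IH => i hi; apply: h; rewrite inE hi orbT.
Qed.

Lemma lat_tjoin (v : nat -> bool) i0 l :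
  eval_lat v (tjoin i0 l) = has v (i0 :: l).
Proof. by elim: l i0 => [|j l IH] i0 //=; rewrite ?orbF // IH. Qed.

Lemma lat_tmeet (v : nat -> bool) i0 l :
  eval_lat v (tmeet i0 l) = all v (i0 :: l).
Proof. by elim: l i0 => [|j l IH] i0 //=; rewrite ?andbT // IH. Qed.

Lemma free_pt {A : Type} (s : nat -> set A) : distr_free s ->
  forall (I J : seq nat), I != [::] -> J != [::] ->
  (forall i, i \in I -> i \notin J) ->
  exists x, (forall i, i \in I -> s i x) /\ (forall j, j \in J -> ~ s j x).
Proof.
move=> hs [//|i0 I] [//|j0 J] _ _ hdis.
apply: contrapT => hn.
have e : eval_set s (LJoin (tmeet i0 I) (tjoin j0 J)) = eval_set s (tjoin j0 J).
  apply: seteq_ext => x /=; split; last by right.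
  move=> [/eval_tmeet hm|//]; apply/eval_tjoin.
  apply: contrapT => hx; apply: hn; exists x; split => // j hj sj.
  by apply: hx; exists j.
have := hs _ _ e _ bool (fun i => i \in i0 :: I) => /=.
rewrite lat_tjoin lat_tmeet.
have -> : all (fun i => i \in i0 :: I) (i0 :: I) by apply/allP.
have -> : has (fun i => i \in i0 :: I) (j0 :: J) = false.
  apply/negbTE/hasPn => j hj; apply/negP => hj2.
  by move: (hdis j hj2); rewrite hj.
by [].
Qed.
Arguments sep {A W s}.
Arguments free_pt {A s}.


Definition npre {A : Type} (s : nat -> set A) (a : A) (p : nat -> nat) (x : A) (k : nat) :=
  exists i, (i < p k)%N /\ ~ s i a /\ s i x.
Definition Lset {A : Type} (s : nat -> set A) (a : A) (j : nat) : set A :=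
  [set y | forall i, (i < j)%N -> s i a -> s i y].
Definition Dset {A : Type} (s : nat -> set A) (a : A) (q : nat -> nat) (N : set nat) (k : nat) : set A :=
  [set y | Lset s a (q k).+1 y \/ (N k /\ Lset s a (q k) y)].
Definition Prel {A : Type} (s : nat -> set A) (a : A) (p q : nat -> nat) (N : set nat) (x y : A) :=
  forall k, ~ npre s a p x k -> Dset s a q N k y.

Lemma incr_lt {f : nat -> nat} : (forall n, (f n < f n.+1)%N) ->
  forall m n, (m < n)%N -> (f m < f n)%N.
Proof.
move=> hf m; elim=> [//|n IH]; rewrite ltnS leq_eqVlt => /orP [/eqP ->|h] //.
exact: ltn_trans (IH h) (hf n).
Qed.

Lemma incr_ge {f : nat -> nat} : (forall n, (f n < f n.+1)%N) -> forall n, (n <= f n)%N.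
Proof. move=> hf; elim=> [//|n IH]; exact: leq_ltn_trans IH (hf n). Qed.

Lemma L_anti {A : Type} (s : nat -> set A) a i j y : (i <= j)%N -> Lset s a j y -> Lset s a i y.
Proof. move=> hij h k hk; apply: h; exact: leq_trans hk hij. Qed.

Lemma D_L {A : Type} (s : nat -> set A) a q N k y : Dset s a q N k y -> Lset s a (q k) y.
Proof. move=> [h|[_ h]] //; exact: L_anti _ h. Qed.

Lemma npre_mono {A : Type} (s : nat -> set A) a p x k k' :
  (forall n, (p n < p n.+1)%N) -> (k <= k')%N -> npre s a p x k -> npre s a p x k'.
Proof.
move=> hp hk [i [hi h]]; exists i; split => //.
move: hk; rewrite leq_eqVlt => /orP [/eqP <- //|hk].
have h2 : (p k < p k')%N by exact: incr_lt. exact: ltn_trans hi h2.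
Qed.

Lemma Prel_mono {A : Type} (s : nat -> set A) a p q N M x y :
  N `<=` M -> Prel s a p q N x y -> Prel s a p q M x y.
Proof. move=> hNM h k hk; case: (h k hk) => [?|[? ?]]; [left|right] => //; split => //; exact: hNM. Qed.

Arguments L_anti {A s a i j y}.
Arguments D_L {A s a q N k y}.
Arguments npre_mono {A s a p x k k'}.
Arguments Prel_mono {A s a p q N M x y}.

Lemma row_W {A : Type} (W : set (set A)) (s : nat -> set A) a p q N x :
  pratt_comonoid W -> pratt_T1 W -> pratt_generated_by W (range s) ->
  (forall n, (p n < p n.+1)%N) -> (forall n, (q n < q n.+1)%N) ->
  W [set y | Prel s a p q N x y \/ Prel s a p q N y x].
Proof.
move=> hW hT hG hp hq.
have Ws : forall i, W (s i) by move=> i; apply: hG.2.1; exists i.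
have WL : forall j, W (Lset s a j).
  move=> j; exact: (@W_bforall _ W j (fun i => s i a) s hW Ws).
have WD : forall k, W (Dset s a q N k).
  move=> k; apply: (W_setU hW (WL _)); exact: (@W_condl _ W (N k) _ hW (WL _)).
have Wnp : forall k, W [set y | npre s a p y k].
  move=> k; exact: (@W_bexists _ W (p k) (fun i => ~ s i a) s hW Ws).
case: (pselect (x = a)) => [->|hxa].
  have [_ [hTT _]] := hW.
  rewrite (_ : [set y | _] = setT) //; apply: seteq_ext => y /=; split => // _.
  by right => k _; left => i _.
have [i0 [hi0 hi0a]] := sep hT hG _ _ hxa.
have [o [hoa hox]] := sep hT hG _ _ (nesym hxa).
have E1 : [set y | Prel s a p q N x y] =
    [set y | forall k, (k < i0.+1)%N -> ~ npre s a p x k -> Dset s a q N k y].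
  apply: seteq_ext => y /=; split; first by move=> h k _; exact: h.
  move=> h k hk; case: (ltnP k i0.+1) => hki; first exact: h.
  exfalso; apply: hk; exists i0; split => //.
  exact: leq_trans hki (incr_ge hp k).
have nD : ~ Dset s a q N o.+1 x.
  move=> hd; have h := D_L hd; apply: hox; apply: h hoa.
  exact: leq_trans (ltnSn o) (incr_ge hq o.+1).
have E2 : [set y | Prel s a p q N y x] =
    [set y | forall k, (k < o.+2)%N -> ~ Dset s a q N k x -> npre s a p y k].
  apply: seteq_ext => y /=; split.
    move=> h k _ nd; apply: contrapT => nn; exact: nd (h k nn).
  move=> h k nn; apply: contrapT => nd; apply: nn.
  case: (ltnP k o.+2) => hk; first exact: h.
  apply: (npre_mono hp _ (h o.+1 (ltnSn _) nD)); exact: ltnW.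
have h1 : W [set y | Prel s a p q N x y].
  by rewrite E1; exact: (@W_bforall _ W i0.+1 _ _ hW WD).
have h2 : W [set y | Prel s a p q N y x].
  by rewrite E2; exact: (@W_bforall _ W o.+2 _ _ hW Wnp).
exact: (W_setU hW h1 h2).
Qed.


Lemma Prel_cup {A : Type} (s : nat -> set A) a p q (NN : set (set nat)) N0 x :
  (forall n, (q n < q n.+1)%N) -> NN N0 ->
  Prel s a p q [set k | exists2 N, NN N & N k] x x ->
  exists2 N, NN N & Prel s a p q N x x.
Proof.
move=> hq hN0 h.
case: (pselect (exists k0, ~ npre s a p x k0 /\ ~ Lset s a (q k0).+1 x)).
  move=> [k0 [hk0 hL]]; case: (h k0 hk0) => [//|[[N hN Nk0] hLq]].
  exists N => // k hk; case: (ltngtP k k0) => hkk.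
  - left; apply: (L_anti _ hLq); exact: incr_lt hq _ _ hkk.
  - exfalso; apply: hL; have := D_L (h k hk); apply: L_anti.
    exact: incr_lt hq _ _ hkk.
  - by rewrite hkk; right.
move=> hn; exists N0 => // k hk; left; apply: contrapT => hL; apply: hn.
by exists k.
Qed.

Lemma Prel_cap {A : Type} (s : nat -> set A) a p q (NN : set (set nat)) N0 x :
  NN N0 -> (forall N, NN N -> Prel s a p q N x x) ->
  Prel s a p q [set k | forall N, NN N -> N k] x x.
Proof.
move=> hN0 h k hk; case: (pselect (Lset s a (q k).+1 x)) => hL; first by left.
right; split; last exact: D_L (h N0 hN0 k hk).
move=> N hN; case: (h N hN k hk) => [//|[]//].
Qed.

Lemma cell {A : Type} (s : nat -> set A) a (P Q : nat) : distr_free s ->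
  ~ s P a -> s Q a ->
  exists x, s P x /\ (forall i, (i < Q)%N -> s i a -> s i x) /\ ~ s Q x /\
    (forall i, (i < P)%N -> ~ s i a -> ~ s i x).
Proof.
move=> hs hP hQ.
have hdis : forall i, i \in P :: [seq i <- iota 0 Q | `[< s i a >]] ->
    i \notin Q :: [seq i <- iota 0 P | ~~ `[< s i a >]].
  move=> i; rewrite !inE !mem_filter !mem_iota /= !add0n.
  case/orP => [/eqP ->|/andP [/asboolP ha hi]].
    rewrite ltnn andbF orbF; apply/eqP => e; apply: hP; by rewrite e.
  apply/negP => /orP [/eqP e|/andP [/asboolP na _]] //.
  by move: hi; rewrite e ltnn.
have [x [hI hJ]] := free_pt hs (P :: [seq i <- iota 0 Q | `[< s i a >]]) (Q :: [seq i <- iota 0 P | ~~ `[< s i a >]]) isT isT hdis.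
exists x; split; first by apply: hI; rewrite inE eqxx.
  split; first by move=> i hi ha; apply: hI; rewrite inE mem_filter mem_iota /= add0n hi andbT; apply/orP; right; apply/asboolP.
  split; first by apply: hJ; rewrite inE eqxx.
  move=> i hi na; apply: hJ; rewrite inE mem_filter mem_iota /= add0n hi andbT; apply/orP; right; apply/asboolP.
  done.
Qed.


Lemma Zinf {A : Type} (W : set (set A)) (s : nat -> set A) a :
  pratt_T1 W -> pratt_generated_by W (range s) -> distr_free s ->
  forall m, exists i, (m <= i)%N /\ ~ s i a.
Proof.
move=> hT hG hs m; apply: contrapT => hn.
have hall : forall i, (m <= i)%N -> s i a.
  move=> i hi; apply: contrapT => ns; apply: hn; by exists i.
have hdis : forall i, i \in [:: m] -> i \notin m.+1 :: [seq i <- iota 0 m | ~~ `[< s i a >]].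
  move=> i; rewrite !inE => /eqP ->; rewrite mem_filter mem_iota /= add0n ltnn andbF orbF.
  by rewrite ltn_eqF.
have [x [hI hJ]] := free_pt hs [:: m] (m.+1 :: [seq i <- iota 0 m | ~~ `[< s i a >]]) isT isT hdis.
have hxa : x <> a.
  move=> e; apply: (hJ m.+1); first by rewrite inE eqxx.
  by rewrite e; apply: hall.
have [i [hix hia]] := sep hT hG _ _ hxa.
case: (ltnP i m) => him; last by apply: hia; apply: hall.
apply: (hJ i) hix; rewrite inE mem_filter mem_iota /= add0n him andbT.
by apply/orP; right; apply/asboolP.
Qed.

Lemma Oinf {A : Type} (W : set (set A)) (s : nat -> set A) a :
  pratt_T1 W -> pratt_generated_by W (range s) -> distr_free s ->
  forall m, exists i, (m <= i)%N /\ s i a.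
Proof.
move=> hT hG hs m; apply: contrapT => hn.
have hall : forall i, (m <= i)%N -> ~ s i a.
  move=> i hi ns; apply: hn; by exists i.
have hdis : forall i, i \in m :: [seq i <- iota 0 m | `[< s i a >]] -> i \notin [:: m.+1].
  move=> i; rewrite !inE mem_filter mem_iota /= add0n => /orP [/eqP ->|/andP [_ hi]].
    by rewrite eqn_leq ltnn andbF.
  apply/negP => /eqP e; move: hi; rewrite e ltnNge; by rewrite leqnSn.
have [x [hI hJ]] := free_pt hs (m :: [seq i <- iota 0 m | `[< s i a >]]) [:: m.+1] isT isT hdis.
have hax : a <> x.
  move=> e; apply: (hall m (leqnn m)); rewrite e; apply: hI; by rewrite inE eqxx.
have [i [hia hix]] := sep hT hG _ _ hax.
case: (ltnP i m) => him; last by apply: (hall i him).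
apply: hix; apply: hI; rewrite inE mem_filter mem_iota /= add0n him andbT.
by apply/orP; right; apply/asboolP.
Qed.

Lemma A_inhab {A : Type} (s : nat -> set A) : distr_free s -> exists a : A, True.
Proof.
move=> hs.
have hdis : forall i, i \in [:: 0] -> i \notin [:: 1] by move=> i; rewrite !inE => /eqP ->.
have [x _] := free_pt hs [:: 0] [:: 1] isT isT hdis.
by exists x.
Qed.


Theorem theorem7p10 (A : Type) (W : set (set A)) (s : nat -> set A) :
  pratt_comonoid W ->
  pratt_T1 W ->
  distr_free s ->
  pratt_generated_by W (range s) ->
  (exists g : set nat -> set A, (forall X, W (g X)) /\
      (forall X Y, g X = g Y -> X = Y)) /\
  (exists (L : set (set A)) (f : set nat -> set A),
      L `<=` W /\ complete_sublattice L /\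
      (forall X, L (f X)) /\ (forall U, L U -> exists X, f X = U) /\
      (forall X Y, X `<=` Y <-> f X `<=` f Y)).
Proof.
move=> hW hT hs hG.
have [a _] := A_inhab s hs.
have hZ := @Zinf _ W s a hT hG hs.
have hO := @Oinf _ W s a hT hG hs.
pose pZ m := proj1_sig (cid (hZ m)).
pose qO m := proj1_sig (cid (hO m)).
have pZP : forall m, (m <= pZ m)%N /\ ~ s (pZ m) a := fun m => proj2_sig (cid (hZ m)).
have qOP : forall m, (m <= qO m)%N /\ s (qO m) a := fun m => proj2_sig (cid (hO m)).
pose p n := iter n (fun m => pZ m.+1) (pZ 0).
pose q n := iter n (fun m => qO m.+1) (qO 0).
have hp : forall n, (p n < p n.+1)%N by move=> n; rewrite /p iterS; exact: (pZP _).1.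
have hq : forall n, (q n < q n.+1)%N by move=> n; rewrite /q iterS; exact: (qOP _).1.
have hpZ : forall n, ~ s (p n) a.
  by case=> [|n]; [exact: (pZP 0).2 | rewrite /p iterS; exact: (pZP _).2].
have hqO : forall n, s (q n) a.
  by case=> [|n]; [exact: (qOP 0).2 | rewrite /q iterS; exact: (qOP _).2].
pose fset N := [set b | Prel s a p q N b b \/ Prel s a p q N b b].
have Wf : forall N, W (fset N).
  move=> N; have [_ [_ hC]] := hW.
  suff hc : crossword W (fun xy : A * A => Prel s a p q N xy.1 xy.2 \/ Prel s a p q N xy.2 xy.1).
    exact: (hC _ hc).
  move=> x; split; first exact: (@row_W _ W s a p q N x hW hT hG hp hq).
  rewrite /=.
  have -> : [set b | Prel s a p q N b x \/ Prel s a p q N x b] =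
            [set b | Prel s a p q N x b \/ Prel s a p q N b x].
    by apply: seteq_ext => b /=; split => -[h|h]; [right|left|right|left].
  exact: (@row_W _ W s a p q N x hW hT hG hp hq).
have emb : forall N M, fset N `<=` fset M -> N `<=` M.
  move=> N M hNM n hn; apply: contrapT => hnM.
  have [x [h4 [h1 [h2 h3]]]] := @cell _ s a (p n) (q n) hs (hpZ n) (hqO n).
  have hx : Prel s a p q N x x.
    move=> k hk; case: (ltngtP k n) => hkn.
    - left => i hi ha; apply: h1 ha; rewrite ltnS in hi.
      exact: leq_ltn_trans hi (incr_lt hq _ _ hkn).
    - exfalso; apply: hk; exists (p n); split; first exact: incr_lt hp _ _ hkn.
      by split; [exact: hpZ | exact: h4].
    - by rewrite hkn; right; split => // i hi ha; exact: h1.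
  have : fset M x by apply: hNM; left.
  move=> [hM|hM].
  - have hnp : ~ npre s a p x n by move=> [i [hi [ha hxi]]]; exact: h3 i hi ha hxi.
    case: (hM n hnp) => [hL|[hMn _]] //.
    by apply: h2; apply: hL (ltnSn _) (hqO n).
  - have hnp : ~ npre s a p x n by move=> [i [hi [ha hxi]]]; exact: h3 i hi ha hxi.
    case: (hM n hnp) => [hL|[hMn _]] //.
    by apply: h2; apply: hL (ltnSn _) (hqO n).
have mono : forall N M, N `<=` M -> fset N `<=` fset M.
  by move=> N M h x [hx|hx]; left; exact: Prel_mono h hx.
split.
  exists fset; split => // X Y e; apply/seteqP; split; apply: emb; by rewrite e.
exists [set U | exists N, fset N = U], fset.
split; first by move=> U [N <-]; exact: Wf.
split.
  move=> F hF [U0 hU0].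
  have [N0 e0] := hF U0 hU0.
  pose NN := [set N | F (fset N)].
  have hN0 : NN N0 by rewrite /NN /= e0.
  split.
  - exists [set k | exists2 N, NN N & N k]; apply: seteq_ext => x; split.
      move=> hx; have hP : Prel s a p q [set k | exists2 N, NN N & N k] x x by case: hx.
      have [N hN hPN] := @Prel_cup _ s a p q NN N0 x hq hN0 hP.
      by exists (fset N) => //; left.
    move=> [X hX hXx]; have [N eN] := hF X hX; rewrite -eN in hX hXx.
    by left; case: hXx => h; apply: Prel_mono _ h => k hk; exists N.
  - exists [set k | forall N, NN N -> N k]; apply: seteq_ext => x; split.
      move=> hx X hX; have [N eN] := hF X hX; rewrite -eN; rewrite -eN in hX.
      by left; case: hx => h; apply: Prel_mono _ h => k hk; exact: hk _ hX.
    move=> hx; left; apply: (@Prel_cap _ s a p q NN N0 x hN0) => N hN.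
    by case: (hx _ hN).
split; first by move=> X; exists X.
split; first by move=> U [N e]; exists N.
by move=> X Y; split; [exact: mono | exact: emb].
Qed.
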